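(* Let $(X,d)$ be an $F$-space with non-decreasing metric $d$ and let $\mathcal{E}(x)=\{e_n(x)\}_{n=0}^\infty$ be a scale on $X$. The following are equivalent: (i) there exists $\{\varepsilon_n\}\searrow0$ such that $e_n(x)=\mathbf{O}(\varepsilon_n)$ for all $x\in X$; (ii) there exist $\{\varepsilon_n\}\searrow0$, $C>0$ and $r_0>0$ such that $e_n(x)\le C\varepsilon_n$ for all $n\in\mathbb{N}$ and all $x\in B(0,r_0)$. Consequently, the scale $\mathcal{E}$ satisfies Shapiro's theorem on $X$ if and only if $$\inf_{n\in\mathbb{N}}\ \sup_{x\in B(0,r)\cap X_{\mathcal{E}}}e_n(x)>0\quad\text{for all } r>0.$$
   Context: An $F$-space is a complete metric vector space with translation-invariant metric $d$; $d$ is non-decreasing if $d(\alpha x,0)\le d(x,0)$ for $0\le\alpha\le1$. Write $\|x\|=d(x,0)$ and $B(0,r)=\{x:d(x,0)\le r\}$. A map $\mathcal{E}:X\to\ell^\infty$, $\mathcal{E}(x)=\{e_n(x)\}_{n=0}^\infty$ with each $e_n:X\to[0,\infty)$, is a scale on $X$ if: (i) there is $C_1>0$ with $C_1\|x\|\ge e_n(x)\ge e_{n+1}(x)$ for all $x,n$, and each $e_n$ is continuous; (ii) there exist a strictly increasing $K:\mathbb{N}\to\mathbb{N}$ and $C_2>0$ with $e_{K(n)}(x+y)\le C_2(e_n(x)+e_n(y))$ for all $x,y,n$; (iii) there is $\phi:[0,\infty)\to[0,\infty)$ with $e_n(\lambda x)\le\phi(|\lambda|)e_n(x)$ for all scalars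 $\lambda$, and $e_n(-x)=e_n(x)$. $X_{\mathcal{E}}=\{x\in X:\mathcal{E}(x)\in c_0\}$. The scale $\mathcal{E}$ satisfies Shapiro's theorem if for every non-increasing sequence $\{\varepsilon_n\}\in c_0$ of nonnegative reals there exists $x\in X_{\mathcal{E}}$ with $e_n(x)\neq\mathbf{O}(\varepsilon_n)$. The notation $\{\varepsilon_n\}\searrow0$ means a non-increasing sequence of nonnegative reals converging to $0$. *)

(* Defs.v *)
From HB Require Import structures.
From mathcomp Require Import all_boot all_order all_algebra.
From mathcomp Require Import boolp classical_sets reals.
Set Implicit Arguments. Unset Strict Implicit. Unset Printing Implicit Defensive.
Import Order.TTheory GRing.Theory Num.Theory.
Local Open Scope ring_scope.
Local Open Scope classical_set_scope.

Section Defs.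
Variables (R : realType) (X : lmodType R).

Definition is_metric (d : X -> X -> R) : Prop :=
  [/\ forall x y, 0 <= d x y,
      forall x y, d x y = 0 <-> x = y,
      forall x y, d x y = d y x &
      forall x y z, d x z <= d x y + d y z].

(* F-space: complete metric vector space with translation-invariant metric;
   "metric vector space" = the vector operations are continuous for d
   (addition is automatically continuous by translation invariance;
   we require joint sequential continuity of scalar multiplication). *)
Definition Fspace (d : X -> X -> R) : Prop :=
  [/\ is_metric d,
      (forall x y z, d (x + z) (y + z) = d x y),
      (forall (l : nat -> R) (u : nat -> X) (l0 : R) (x0 : X),
          (forall eps, 0 < eps -> exists N, forall n, (N <= n)%N -> `|l n - l0| < eps) ->
          (forall eps, 0 < eps -> exists N, forall n, (N <= n)%N -> d (u n) x0 < eps) ->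
          forall eps, 0 < eps -> exists N, forall n, (N <= n)%N ->
            d (l n *: u n) (l0 *: x0) < eps) &
      (forall u : nat -> X,
          (forall eps, 0 < eps -> exists N, forall m n, (N <= m)%N -> (N <= n)%N ->
              d (u m) (u n) < eps) ->
          exists x0, forall eps, 0 < eps -> exists N, forall n, (N <= n)%N ->
              d (u n) x0 < eps)].

Definition Fnorm (d : X -> X -> R) (x : X) : R := d x 0.

Definition nondecreasing_metric (d : X -> X -> R) : Prop :=
  forall (a : R) (x : X), 0 <= a -> a <= 1 -> Fnorm d (a *: x) <= Fnorm d x.

Definition ball0 (d : X -> X -> R) (r : R) : set X := [set x | Fnorm d x <= r].

Definition dcontinuous (d : X -> X -> R) (f : X -> R) : Prop :=
  forall x eps, 0 < eps -> exists2 delta, 0 < delta &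
    forall y, d y x < delta -> `|f y - f x| < eps.

Definition is_scale (d : X -> X -> R) (e : nat -> X -> R) : Prop :=
  [/\ (forall n x, 0 <= e n x),
      (exists2 C1, 0 < C1 & forall x n, e n x <= C1 * Fnorm d x /\ e n.+1 x <= e n x),
      (forall n, dcontinuous d (e n)),
      (exists K : nat -> nat, exists2 C2, 0 < C2 &
         (forall m n, (m < n)%N -> (K m < K n)%N) /\
         (forall x y n, e (K n) (x + y) <= C2 * (e n x + e n y))) &
      (exists phi : R -> R,
         (forall t, 0 <= t -> 0 <= phi t) /\
         (forall (l : R) x n, e n (l *: x) <= phi `|l| * e n x) /\
         (forall x n, e n (- x) = e n x))].

Definition cvg0 (u : nat -> R) : Prop :=
  forall eps, 0 < eps -> exists N, forall n, (N <= n)%N -> `|u n| < eps.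

Definition decr_to0 (eps : nat -> R) : Prop :=
  (forall n, 0 <= eps n) /\ (forall n, eps n.+1 <= eps n) /\ cvg0 eps.

Definition bigO_seq (a b : nat -> R) : Prop :=
  exists C, exists N, forall n, (N <= n)%N -> `|a n| <= C * `|b n|.

Definition XE (e : nat -> X -> R) : set X := [set x | cvg0 (fun n => e n x)].

Definition Shapiro (e : nat -> X -> R) : Prop :=
  forall eps, decr_to0 eps ->
    exists2 x, XE e x & ~ bigO_seq (fun n => e n x) eps.

End Defs.

(* Main.v *)
Require Import Defs.
From HB Require Import structures.
From mathcomp Require Import all_boot all_order all_algebra.
From mathcomp Require Import boolp classical_sets reals.
Import Order.TTheory GRing.Theory Num.Theory.
Local Open Scope ring_scope.
Local Open Scope classical_set_scope.

From mathcomp Require Import lra.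
Set Implicit Arguments. Unset Strict Implicit.




Lemma inv_small {R : realType} (eps : R) : 0 < eps ->
  exists N, forall n, (N <= n)%N -> n.+1%:R^-1 < eps.
Proof.
move=> he; have [k hk] := ltr_add_invr he; exists k => n hn.
rewrite add0r in hk; apply: le_lt_trans hk.
rewrite lef_pV2 ?posrE ?ltr0Sn // ler_nat; exact: hn.
Qed.

Lemma scale_small (R : realType) (X : lmodType R) (d : X -> X -> R) x r :
  Fspace d -> 0 < r -> exists k : nat, Fnorm d (k.+1%:R^-1 *: x) <= r.
Proof.
case=> [[_ hd0 _ _] _ hsc _] hr.
have := hsc (fun n => n.+1%:R^-1) (fun _ => x) 0 x _ _ r hr.
case.
- move=> eps he; have [N hN] := @inv_small R eps he; exists N => n hn.
  rewrite subr0 ger0_norm; [exact: hN|by rewrite invr_ge0].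
- move=> eps he; exists 0%N => n _; by rewrite (proj2 (hd0 x x) erefl).
move=> N hN; exists N; rewrite /Fnorm; have := hN N (leqnn N).
by rewrite scale0r => /ltW.
Qed.

Lemma e_mono (R : realType) (X : lmodType R) (d : X -> X -> R) e :
  is_scale d e -> forall m n x, (m <= n)%N -> e n x <= e m x.
Proof.
case=> _ [C1 _ hC] _ _ _ m n x /subnK <-; elim: (n - m)%N => [|k IH] //.
by rewrite addSn; apply: le_trans IH; case: (hC x (k + m)%N).
Qed.

Lemma e_zero (R : realType) (X : lmodType R) (d : X -> X -> R) e :
  is_metric d -> is_scale d e -> forall n, e n 0 = 0.
Proof.
move=> [_ hd0 _ _] [h0 [C1 _ hC] _ _ _] n; apply/eqP; rewrite eq_le h0 andbT.
case: (hC 0 n) => h _; apply: (le_trans h).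
by rewrite /Fnorm (proj2 (hd0 0 0) erefl) mulr0.
Qed.

Lemma K_ge (K : nat -> nat) : (forall m n, (m < n)%N -> (K m < K n)%N) ->
  forall n, (n <= K n)%N.
Proof.
move=> hK; elim=> [|n IH] //; apply: leq_ltn_trans IH _; exact: hK.
Qed.

Lemma d_refl (R : realType) (X : lmodType R) (d : X -> X -> R) x :
  is_metric d -> d x x = 0.
Proof. by case=> _ h _ _; apply/h. Qed.

Lemma ball0_0 (R : realType) (X : lmodType R) (d : X -> X -> R) r :
  is_metric d -> 0 <= r -> ball0 d r 0.
Proof. by move=> hm r0; rewrite /ball0 /= /Fnorm d_refl. Qed.




Definition ssup (R : realType) (X : lmodType R) (d : X -> X -> R) (e : nat -> X -> R)
  (S : set X) r n := sup [set e n x | x in ball0 d r `&` S].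
Arguments ssup {R X}.

Lemma ssup_has (R : realType) (X : lmodType R) (d : X -> X -> R) e (S : set X) r n :
  is_metric d -> is_scale d e -> S 0 -> 0 <= r ->
  has_sup [set e n x | x in ball0 d r `&` S].
Proof.
move=> hm hs S0 r0; split.
  by exists (e n 0); exists 0 => //; split => //; apply: ball0_0.
case: hs => _ [C1 C1p hC] _ _ _.
exists (C1 * r) => _ [y [hy _] <-]; case: (hC y n) => h _; apply: (le_trans h).
by rewrite ler_pM2l.
Qed.

Lemma ssup_ub (R : realType) (X : lmodType R) (d : X -> X -> R) e (S : set X) r n y :
  is_metric d -> is_scale d e -> S 0 -> 0 <= r -> ball0 d r y -> S y ->
  e n y <= ssup d e S r n.
Proof.
move=> hm hs S0 r0 hy Sy; have := sup_upper_bound (ssup_has n hm hs S0 r0).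
by apply; exists y.
Qed.

Lemma ssup_le (R : realType) (X : lmodType R) (d : X -> X -> R) e (S : set X) r n b :
  is_metric d -> is_scale d e -> S 0 -> 0 <= r ->
  (forall y, ball0 d r y -> S y -> e n y <= b) -> ssup d e S r n <= b.
Proof.
move=> hm hs S0 r0 hb; rewrite /ssup; apply: ge_sup; first by case: (ssup_has n hm hs S0 r0).
by move=> _ [y [hy Sy] <-]; apply: hb.
Qed.

Lemma ssup_decr (R : realType) (X : lmodType R) (d : X -> X -> R) e (S : set X) r :
  is_metric d -> is_scale d e -> S 0 -> 0 <= r ->
  (forall n, 0 <= ssup d e S r n) /\ (forall n, ssup d e S r n.+1 <= ssup d e S r n).
Proof.
move=> hm hs S0 r0; split => n.
  apply: le_trans (ssup_ub n hm hs S0 r0 _ S0).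
    by rewrite (e_zero hm hs).
  exact: ball0_0.
apply: ssup_le => // y hy Sy; apply: le_trans (ssup_ub n hm hs S0 r0 hy Sy).
exact: (e_mono hs).
Qed.




Lemma baire (R : realType) (X : lmodType R) (d : X -> X -> R) (S : set X)
    (F : nat -> set X) x1 :
  Fspace d -> S x1 ->
  (forall (u : nat -> X) x, (forall n, S (u n)) ->
     (forall eps, 0 < eps -> exists N, forall n, (N <= n)%N -> d (u n) x < eps) ->
     S x) ->
  (forall x, S x -> exists k, F k x) ->
  (forall k y, ~ F k y -> exists2 dl, 0 < dl & forall z, d z y < dl -> ~ F k z) ->
  exists k x0 dl, [/\ S x0, 0 < dl & forall y, S y -> d y x0 < dl -> F k y].
Proof.
move=> hF Sx1 Sclosed Scov Fopen; have [hm htr hsc hcompl] := hF.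
have [dpos d0 dsym dtri] := hm.
apply: contrapT => H.
have step : forall kp : nat * (X * R), exists q : X * R,
    S kp.2.1 -> 0 < kp.2.2 ->
    [/\ S q.1, 0 < q.2, q.2 <= kp.2.2 / 4, d q.1 kp.2.1 < kp.2.2 / 4 &
        forall z, d z q.1 < q.2 -> ~ F kp.1 z].
  move=> [k [x r]] /=.
  case: (pselect (S x /\ 0 < r)) => [[Sx rp]|nh]; last first.
    by exists (x, r) => Sx rp; exfalso; apply: nh.
  have : ~ (forall y, S y -> d y x < r / 4 -> F k y).
    move=> hall; apply: H; exists k, x, (r / 4); split => //.
    by apply: divr_gt0.
  move/existsNP => [y] /not_implyP [Sy] /not_implyP [dy] /Fopen [dl dlp hdl].
  exists (y, Order.min dl (r / 4)) => _ _ /=; split => //.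
  - by rewrite lt_min dlp divr_gt0.
  - by rewrite ge_min lexx orbT.
  - by move=> z; rewrite lt_min => /andP [/hdl].
have [f hf] := choice step.
pose p := fix p (k : nat) : X * R := if k is k'.+1 then f (k', p k') else (x1, 1).
have pS : forall k, p k.+1 = f (k, p k) by [].
have inv : forall k, S (p k).1 /\ 0 < (p k).2.
  elim=> [|k [IH1 IH2]]; first by split => //=.
  by rewrite pS; case: (hf (k, p k) IH1 IH2).
pose x k := (p k).1; pose r k := (p k).2.
have hk : forall k, [/\ S (x k.+1), 0 < r k.+1, r k.+1 <= r k / 4,
        d (x k.+1) (x k) < r k / 4 & forall z, d z (x k.+1) < r k.+1 -> ~ F k z].
  by move=> k; rewrite /x /r pS; apply: (hf (k, p k)); case: (inv k).
have rpos : forall k, 0 < r k by move=> k; case: (inv k).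
have rsmall : forall k, r k * k.+1%:R <= 1.
  elim=> [|k IH]; first by rewrite /r /= mul1r.
  case: (hk k) => _ _ hr _ _; have := rpos k; have := rpos k.+1.
  move: IH hr; rewrite [k.+2%:R]mulrSr [k.+1%:R]mulrSr.
  have : (0 : R) <= k%:R by [].
  by move=> *; nra.
have dist : forall n j, d (x (n + j)%N) (x n) <= r n / 3 - r (n + j)%N / 3.
  move=> n; elim=> [|j IH]; first by rewrite addn0 d_refl // subrr.
  rewrite addnS; case: (hk (n + j)%N) => _ _ hr hd _.
  have := dtri (x (n + j).+1) (x (n + j)%N) (x n); lra.
have dist' : forall n m, (n <= m)%N -> d (x m) (x n) <= r n / 3.
  move=> n m /subnKC <-; apply: le_trans (dist n (m - n)%N) _.
  have := rpos (n + (m - n))%N; lra.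
have rlt : forall eps, 0 < eps -> exists N, r N < eps.
  move=> eps he; have [N hN] := @inv_small R eps he; exists N.
  apply: le_lt_trans (hN N (leqnn N)).
  by rewrite -div1r ler_pdivlMr ?ltr0Sn // rsmall.
have [xl hxl] : exists xl, forall eps, 0 < eps -> exists N, forall n, (N <= n)%N ->
    d (x n) xl < eps.
  apply: hcompl => eps he; have [N hN] := rlt eps he; exists N => m n hmN hnN.
  have := dist' N m hmN; have := dist' N n hnN; have := dtri (x m) (x N) (x n).
  rewrite (dsym (x N) (x n)); have := rpos N; lra.
have Sxl : S xl.
  apply: (Sclosed x) => // n; case: n => [|n]; first by rewrite /x /=.
  by case: (hk n).
have [k Fk] := Scov xl Sxl.
case: (hk k) => _ rp _ _ hav; apply: (hav xl) Fk.
have [N hN] := hxl (r k.+1 / 2) (divr_gt0 rp (ltr0Sn _ 1)).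
have h1 := hN (maxn N k.+1) (leq_maxl _ _).
have h2 := dist' k.+1 (maxn N k.+1) (leq_maxr _ _).
have := dtri xl (x (maxn N k.+1)) (x k.+1); rewrite (dsym xl (x (maxn N k.+1))); lra.
Qed.




Lemma key (R : realType) (X : lmodType R) (d : X -> X -> R) e (S : set X) eps :
  Fspace d -> is_scale d e -> S 0 ->
  (forall x y, S x -> S y -> S (x - y)) ->
  (forall (u : nat -> X) x, (forall n, S (u n)) ->
     (forall eps, 0 < eps -> exists N, forall n, (N <= n)%N -> d (u n) x < eps) ->
     S x) ->
  decr_to0 eps -> (forall x, S x -> bigO_seq (fun n => e n x) eps) ->
  exists2 dl, 0 < dl & cvg0 (ssup d e S dl).
Proof.
move=> hF hs S0 Ssub Scl [eps0 [epsd epsc]] hO.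
have [hm htr _ _] := hF; have [dpos d0 dsym dtri] := hm.
have hs' := hs.
case: hs' => h0 [C1 C1p hC] hcont [K [C2 C2p [hK hKadd]]] [phi [hphi0 [hphi hneg]]].
pose F k := [set x | forall n, (k <= n)%N -> e n x <= k%:R * eps n].
have cov : forall x, S x -> exists k, F k x.
  move=> x Sx; have [C [N hN]] := hO x Sx.
  have hB := archi_boundP (normr_ge0 C).
  exists (maxn N (Num.Def.archi_bound `|C|)) => n hn.
  have hn1 : (N <= n)%N := leq_trans (leq_maxl _ _) hn.
  have hn2 : ((Num.Def.archi_bound `|C|)%:R <= (maxn N (Num.Def.archi_bound `|C|))%:R :> R).
    by rewrite ler_nat leq_maxr.
  have := hN n hn1; rewrite ger0_norm // ger0_norm //.
  have := ler_norm C; have := eps0 n; move=> *; nra.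
have op : forall k y, ~ F k y -> exists2 dl, 0 < dl & forall z, d z y < dl -> ~ F k z.
  move=> k y /existsNP [n] /not_implyP [hkn] /negP; rewrite -ltNge => hlt.
  have [dl dlp hdl] := hcont n y (e n y - k%:R * eps n) (ltac:(by rewrite subr_gt0)).
  exists dl => // z /hdl; rewrite ltr_norml => /andP [h1 _] Fz.
  have := Fz n hkn; lra.
have [k [x0 [dl [Sx0 dlp hx0]]]] := baire hF S0 Scl cov op.
exists (dl / 2); first by apply: divr_gt0.
move=> eta etap.
have hpos : 0 < 2 * C2 * k%:R + 1 by have : (0 : R) <= k%:R by []; nra.
have [N hN] := epsc (eta / (2 * C2 * k%:R + 1)) (divr_gt0 etap hpos).
pose n0 := maxn N k.
have he0 : (2 * C2 * k%:R + 1) * eps n0 < eta.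
  have := hN n0 (leq_maxl _ _); rewrite ger0_norm // ltr_pdivlMr // mulrC //.
exists (K n0) => m hmK.
have hdl2 : 0 <= dl / 2 by apply/ltW/divr_gt0.
have [sp _] := ssup_decr hm hs S0 hdl2.
rewrite ger0_norm //.
apply: le_lt_trans he0.
have hb : ssup d e S (dl / 2) m <= 2 * C2 * k%:R * eps n0.
  apply: ssup_le => //.
  move=> y hy Sy; apply: (le_trans (@e_mono _ _ _ _ hs (K n0) m y hmK)).
  have S1 : S (x0 + y) by rewrite -[y]opprK -[- y]sub0r; apply: (Ssub) => //; apply: (Ssub).
  have D1 : d (x0 + y) x0 < dl.
    rewrite addrC -{2}[x0]add0r htr; apply: le_lt_trans hy _.
    have := dlp; lra.
  have F1 := hx0 (x0 + y) S1 D1.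
  have F2 := hx0 x0 Sx0 (ltac:(by rewrite d_refl)).
  have -> : y = (x0 + y) + - x0 by rewrite addrC addKr.
  apply: le_trans (hKadd _ _ n0) _; rewrite hneg.
  have := F1 n0 (leq_maxr _ _); have := F2 n0 (leq_maxr _ _); move=> *; nra.
have := eps0 n0; have := sp m; move=> *; nra.
Qed.




Lemma XE0 (R : realType) (X : lmodType R) (d : X -> X -> R) e :
  is_metric d -> is_scale d e -> XE e 0.
Proof.
move=> hm hs eta etap; exists 0%N => n _; by rewrite (e_zero hm hs) normr0.
Qed.

Lemma XEsub (R : realType) (X : lmodType R) (d : X -> X -> R) e x y :
  is_scale d e -> XE e x -> XE e y -> XE e (x - y).
Proof.
move=> hs hx hy; have hs' := hs.
case: hs' => h0 _ _ [K [C2 C2p [hK hKadd]]] [phi [_ [_ hneg]]].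
move=> eta etap.
have hq : 0 < eta / (2 * C2) by apply: divr_gt0 => //; nra.
have [N1 h1] := hx _ hq; have [N2 h2] := hy _ hq.
exists (K (maxn N1 N2)) => m hmK; rewrite ger0_norm //.
apply: le_lt_trans (@e_mono _ _ _ _ hs _ _ (x - y) hmK) _.
apply: le_lt_trans (hKadd _ _ _) _; rewrite hneg.
have := h1 (maxn N1 N2) (leq_maxl _ _); have := h2 (maxn N1 N2) (leq_maxr _ _).
rewrite !ger0_norm // !ltr_pdivlMr; try nra.
Qed.

Lemma XEclosed (R : realType) (X : lmodType R) (d : X -> X -> R) e
    (u : nat -> X) x :
  Fspace d -> is_scale d e -> (forall n, XE e (u n)) ->
  (forall eps, 0 < eps -> exists N, forall n, (N <= n)%N -> d (u n) x < eps) ->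
  XE e x.
Proof.
move=> hF hs hu hux; have [hm htr _ _] := hF; have [dpos d0 dsym dtri] := hm.
have hs' := hs.
case: hs' => h0 [C1 C1p hC] _ [K [C2 C2p [hK hKadd]]] _.
move=> eta etap.
have hq : 0 < eta / (2 * C2 * C1) by apply: divr_gt0 => //; nra.
have hq2 : 0 < eta / (2 * C2) by apply: divr_gt0 => //; nra.
have [N hN] := hux _ hq; have hd := hN N (leqnn N).
have [N' hN'] := hu N _ hq2; have he := hN' N' (leqnn N').
exists (K N') => m hmK; rewrite ger0_norm //.
apply: le_lt_trans (@e_mono _ _ _ _ hs _ _ x hmK) _.
have -> : x = (x - u N) + u N by rewrite subrK.
apply: le_lt_trans (hKadd _ _ _) _.
case: (hC (x - u N) N') => hc _.
have hF1 : Fnorm d (x - u N) = d (u N) x.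
  by rewrite /Fnorm -(htr _ _ (u N)) subrK add0r dsym.
rewrite hF1 in hc.
have := h0 N' (u N); have := h0 N' (x - u N).
move: he hd; rewrite ger0_norm // !ltr_pdivlMr; try nra.
Qed.

Lemma XEscale (R : realType) (X : lmodType R) (d : X -> X -> R) e (l : R) x :
  is_scale d e -> XE e x -> XE e (l *: x).
Proof.
move=> hs hx; have hs' := hs.
case: hs' => h0 _ _ _ [phi [hphi0 [hphi _]]].
move=> eta etap.
have hp := hphi0 `|l| (normr_ge0 l).
have hq : 0 < eta / (phi `|l| + 1) by apply: divr_gt0 => //; lra.
have [N hN] := hx _ hq; exists N => n hn; rewrite ger0_norm //.
apply: le_lt_trans (hphi l x n) _.
have := hN n hn; rewrite ger0_norm // ltr_pdivlMr; last by lra.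
have := h0 n x; move=> *; nra.
Qed.

Lemma unscale (R : realType) (X : lmodType R) (k : nat) (x : X) :
  x = k.+1%:R *: (k.+1%:R^-1 *: x).
Proof. by rewrite scalerA mulfV ?scale1r // pnatr_eq0. Qed.

Lemma bigO_from_ball (R : realType) (X : lmodType R) (d : X -> X -> R) e
    (S : set X) (s : nat -> R) r x :
  Fspace d -> is_scale d e -> 0 < r -> (forall n, 0 <= s n) ->
  (forall l y, S y -> S (l *: y)) -> S x ->
  (forall n y, ball0 d r y -> S y -> e n y <= s n) ->
  bigO_seq (fun n => e n x) s.
Proof.
move=> hF hs hr sp Ssc Sx hb; have hs' := hs.
case: hs' => h0 _ _ _ [phi [hphi0 [hphi _]]].
have [k hk] := scale_small x hF hr.
have hy := hb _ _ hk (Ssc _ _ Sx).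
exists (phi `|k.+1%:R|), 0%N => n _.
rewrite (ger0_norm (h0 _ _)) (ger0_norm (sp n)).
rewrite {1}(unscale k x); apply: le_trans (hphi _ _ _) _.
have := hphi0 `|k.+1%:R| (normr_ge0 _); have := hy n; have := h0 n (k.+1%:R^-1 *: x).
move=> *; nra.
Qed.

Lemma nonincr_le (R : realType) (s : nat -> R) :
  (forall n, s n.+1 <= s n) -> forall n m, (n <= m)%N -> s m <= s n.
Proof.
move=> h n m /subnK <-; elim: (m - n)%N => [|k IH] //.
by rewrite addSn; apply: le_trans IH.
Qed.

Unset Implicit Arguments. Set Strict Implicit.

Theorem mainTheorem7 (R : realType) (X : lmodType R) (d : X -> X -> R)
    (e : nat -> X -> R) :
  Fspace d -> nondecreasing_metric d -> is_scale d e ->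
  ((exists eps, decr_to0 eps /\ forall x : X, bigO_seq (fun n => e n x) eps) <->
   (exists eps, decr_to0 eps /\ exists C, 0 < C /\ exists r0, 0 < r0 /\
      forall n x, ball0 d r0 x -> e n x <= C * eps n))
  /\
  (Shapiro e <->
   forall r, 0 < r ->
     0 < inf [set sup [set e n x | x in ball0 d r `&` XE e] | n in [set: nat]]).
Proof.
move=> hF _ hs; have [hm _ _ _] := hF.
have hs' := hs; case: hs' => h0 _ _ _ [phi [hphi0 [hphi _]]].
split; split.
- move=> [eps [heps hO]].
  have [dl dlp hc] := key (S := setT) hF hs I (fun _ _ _ _ => I)
    (fun _ _ _ _ => I) heps (fun x _ => hO x).
  have [sp sd] := ssup_decr (S := setT) hm hs I (ltW dlp).
  exists (ssup d e setT dl); split; first by split.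
  exists 1; split => //; exists dl; split => // n x hx.
  by rewrite mul1r; apply: ssup_ub => //; exact: ltW.
- move=> [eps [[e0 [ed ec]] [C [Cp [r0 [r0p hb]]]]]].
  exists eps; split; first by split.
  move=> x; have [C' [N hN]] : bigO_seq (fun n => e n x) (fun n => C * eps n).
    apply: (bigO_from_ball (S := setT)) hF hs r0p _ _ I _ => //.
      by move=> n; apply: mulr_ge0 => //; apply: ltW.
    by move=> n y hy _; apply: hb.
  exists (C' * C), N => n hn; have := hN n hn.
  by rewrite normrM (ger0_norm (ltW Cp)) mulrA.
- move=> hSh r rp; rewrite ltNge; apply/negP => hinf.
  have [sp sd] := ssup_decr (S := XE e) hm hs (XE0 hm hs) (ltW rp).
  have hdec : decr_to0 (ssup d e (XE e) r).
    split => //; split => // eta etap.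
    have hne : [set sup [set e n x | x in ball0 d r `&` XE e] | n in [set: nat]] !=set0.
      by exists (ssup d e (XE e) r 0%N); exists 0%N.
    have := inf_lt hne (le_lt_trans hinf etap).
    move=> [y [n _ hy] hlt]; rewrite -hy in hlt.
    exists n => m hmn; rewrite ger0_norm //; apply: le_lt_trans hlt.
    exact: nonincr_le.
  have [x Xx hnO] := hSh _ hdec; apply: hnO.
  apply: (bigO_from_ball (S := XE e) hF hs rp sp _ Xx).
    by move=> l y Xy; apply: (@XEscale R X d e l y hs Xy).
  by move=> n y hy Sy; apply: (ssup_ub n hm hs (XE0 hm hs) (ltW rp) hy Sy).
- move=> hinf eps heps; apply: contrapT => H.
  have hO : forall x, XE e x -> bigO_seq (fun n => e n x) eps.
    by move=> x Xx; apply: contrapT => hn; apply: H; exists x.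
  have [dl dlp hc] := key (S := XE e) hF hs (XE0 hm hs)
    (fun x y => @XEsub R X d e x y hs)
    (fun u x hu hux => XEclosed hF hs hu hux) heps hO.
  have [sp sd] := ssup_decr (S := XE e) hm hs (XE0 hm hs) (ltW dlp).
  have hi := hinf dl dlp.
  have [n hn] := hc _ hi; have hn' := hn n (leqnn n).
  rewrite ger0_norm // in hn'.
  have hlb : has_lbound [set sup [set e n x | x in ball0 d dl `&` XE e] | n in [set: nat]].
    by exists 0 => _ [m _ <-]; apply: sp.
  have := ge_inf hlb; move=> /(_ (ssup d e (XE e) dl n)) h.
  have := h (ex_intro2 _ _ n I erefl); lra.
Qed.
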